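(* Let $\mathcal{G}_I$ be the class of all finite irreflexive graphs. (1) A class $\mathcal{C}\subseteq\mathcal{G}_I$ that is downward closed under the homomorphic image ordering is well quasi-ordered (under that ordering) if and only if it is finite. (2) For any finite set $\{O_1,\dots,O_k\}\subseteq\mathcal{G}_I$, the class $\mathrm{Av}(O_1,\dots,O_k)$, taken with respect to either the homomorphic image ordering or the strong homomorphic image ordering, is not well quasi-ordered (under the respective ordering).
   Context: An irreflexive graph is a set with a symmetric edge relation having no loops; homomorphisms map edges to edges (so an edge cannot be collapsed to a single vertex). A homomorphism $\phi$ is strong if additionally every edge of the target between vertices of the image is the image of an edge. Homomorphic image ordering: $A\preceq B$ iff there is a surjective homomorphism $B\to A$; strong homomorphic image ordering: iff there is a surjective strong homomorphism $B\to A$. For a set $B$ of structures, $\mathrm{Av}(B)=\{x\in\mathcal{G}_I : b\not\preceq x \text{ for all } b\in B\}$. Well quasi-ordered means no infinite strictly decreasing sequence and no infinite antichain; graphs are considered up to isomorphism (finite means finitely many isomorphism types). *)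

(* Defs.v *)
From mathcomp Require Import all_boot.
Set Implicit Arguments. Unset Strict Implicit. Unset Printing Implicit Defensive.

Record graph := Graph {
  gn : nat;
  gadj : rel 'I_gn;
  gsym : symmetric gadj;
  girr : irreflexive gadj }.

Definition is_hom (G H : graph) (f : 'I_(gn G) -> 'I_(gn H)) : Prop :=
  forall x y, gadj x y -> gadj (f x) (f y).

Definition is_strong (G H : graph) (f : 'I_(gn G) -> 'I_(gn H)) : Prop :=
  forall x y, gadj (f x) (f y) ->
    exists x' y', [/\ f x' = f x, f y' = f y & gadj x' y'].

Definition is_surj (G H : graph) (f : 'I_(gn G) -> 'I_(gn H)) : Prop :=
  forall v, exists u, f u = v.

Definition hle (A B : graph) : Prop :=
  exists f : 'I_(gn B) -> 'I_(gn A), is_hom f /\ is_surj f.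

Definition shle (A B : graph) : Prop :=
  exists f : 'I_(gn B) -> 'I_(gn A), [/\ is_hom f, is_strong f & is_surj f].

Definition graph_iso (G H : graph) : Prop :=
  exists f : 'I_(gn G) -> 'I_(gn H),
    bijective f /\ forall x y, gadj (f x) (f y) = gadj x y.

Definition graph_class := graph -> Prop.

Definition down_closed (le : graph -> graph -> Prop) (C : graph_class) : Prop :=
  forall A B, C B -> le A B -> C A.

Definition finite_class (C : graph_class) : Prop :=
  exists (n : nat) (s : nat -> graph),
    forall G, C G -> exists i, i < n /\ graph_iso G (s i).

Definition strictly_below (le : graph -> graph -> Prop) (A B : graph) : Prop :=
  le A B /\ ~ le B A.

Definition wqo (le : graph -> graph -> Prop) (C : graph_class) : Prop :=
  (~ exists s : nat -> graph,
       (forall n, C (s n)) /\ forall n, strictly_below le (s n.+1) (s n)) /\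
  (~ exists s : nat -> graph,
       (forall n, C (s n)) /\ forall i j, i <> j -> ~ le (s i) (s j)).

Definition Av (le : graph -> graph -> Prop) (k : nat) (O : 'I_k -> graph) : graph_class :=
  fun x => forall i, ~ le (O i) x.

(* Main.v *)
Require Import Defs.
From mathcomp Require Import all_boot.
From Stdlib Require Import Classical ClassicalEpsilon.
Set Implicit Arguments. Unset Strict Implicit.

Definition Kg_sym (m : nat) : symmetric (fun x y : 'I_m => x != y).
Proof. by move=> x y; rewrite eq_sym. Qed.
Definition Kg_irr (m : nat) : irreflexive (fun x y : 'I_m => x != y).
Proof. by move=> x; rewrite eqxx. Qed.
Definition Kg (m : nat) : graph := @Graph m (fun x y => x != y) (@Kg_sym m) (@Kg_irr m).

Lemma surj_le (A B : graph) (f : 'I_(gn B) -> 'I_(gn A)) :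
  is_surj f -> gn A <= gn B.
Proof.
move=> Hs.
pose g v := proj1_sig (constructive_indefinite_description _ (Hs v)).
have gK : cancel g f by move=> v; rewrite /g; case: constructive_indefinite_description.
have := @leq_card _ _ g (can_inj gK); by rewrite !card_ord.
Qed.

Lemma hle_K (A : graph) m : hle A (Kg m) -> m <= gn A.
Proof.
case=> f [Hh _].
have inj : injective f.
  move=> x y Hxy; apply/eqP; apply/negPn/negP => Hne.
  have := Hh x y Hne; by rewrite Hxy (girr (f y)).
by have := @leq_card _ _ f inj; rewrite !card_ord.
Qed.

Lemma hle_KK a b : hle (Kg a) (Kg b) -> a = b.
Proof.
move=> H; apply/eqP; rewrite eqn_leq (hle_K H) andbT.
case: H => f [_ Hs]; exact: (surj_le Hs).
Qed.

Lemma shle_hle A B : shle A B -> hle A B.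
Proof. by case=> f [? ? ?]; exists f. Qed.

Lemma hle_refl A : hle A A.
Proof. by exists id; split=> // v; exists v. Qed.

Lemma hle_trans A B C : hle A B -> hle B C -> hle A C.
Proof.
case=> f [Hf Sf] [g [Hg Sg]]; exists (f \o g); split.
- by move=> x y /Hg /Hf.
- move=> v; case: (Sf v) => u <-; case: (Sg u) => w <-; by exists w.
Qed.

Lemma iso_hle A B : graph_iso A B -> hle B A /\ hle A B.
Proof.
case=> f [[g fK gK] Hadj]; split.
- exists f; split; first by move=> x y; rewrite Hadj.
  by move=> v; exists (g v).
- exists g; split; last by move=> v; exists (f v).
  by move=> x y Hxy; rewrite -Hadj !gK.
Qed.

Definition code N := {m : 'I_N & {ffun 'I_m -> {ffun 'I_m -> bool}}}.

Definition mk_adj N (c : code N) : rel 'I_(tag c) :=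
  fun x y => [&& tagged c x y, tagged c y x & x != y].
Lemma mk_sym N (c : code N) : symmetric (@mk_adj N c).
Proof. by move=> x y; rewrite /mk_adj andbCA eq_sym. Qed.
Lemma mk_irr N (c : code N) : irreflexive (@mk_adj N c).
Proof. by move=> x; rewrite /mk_adj eqxx !andbF. Qed.
Definition mk N (c : code N) : graph := @Graph (tag c) (@mk_adj N c) (@mk_sym N c) (@mk_irr N c).

Lemma bounded_finite (C : graph_class) N :
  (forall G, C G -> gn G < N) -> finite_class C.
Proof.
move=> HN.
exists (size (enum {: code N})), (fun i => nth (Kg 0) (map (@mk N) (enum {: code N})) i).
move=> G /HN HG.
pose c : code N := Tagged (fun m : 'I_N => {ffun 'I_m -> {ffun 'I_m -> bool}})
   (i := Ordinal HG) [ffun x => [ffun y => gadj x y]].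
have cin : c \in enum {: code N} by rewrite mem_enum.
exists (index c (enum {: code N})); split; first by rewrite index_mem.
rewrite (nth_map c) ?index_mem // nth_index //.
exists (fun x => x); split; first by exists (fun x => x).
move=> x y; rewrite /= /mk_adj /= !ffunE.
case E: (gadj x y) => //=.
rewrite (@gsym G) E /=; apply/eqP => exy; subst y; by rewrite (@girr G) in E.
Qed.

Lemma part1 (C : graph_class) : down_closed hle C -> (wqo hle C <-> finite_class C).
Proof.
move=> Hd; split.
- move=> [_ Hanti].
  apply: NNPP => Hnf.
  have Hbig : forall N, exists m, N <= m /\ C (Kg m).
    move=> N; apply: NNPP => Hno; apply: Hnf; apply: (@bounded_finite C N) => G CG.
    rewrite ltnNge; apply/negP => HNG; apply: Hno; exists (gn G); split => //.
    apply: (Hd _ G CG); exists (fun x => x); split; last by move=> v; exists v.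
    move=> x y Hxy /=; apply/eqP => exy; subst y; by rewrite (@girr G) in Hxy.
  pose g N := proj1_sig (constructive_indefinite_description _ (Hbig N)).
  have gP N : N <= g N /\ C (Kg (g N)).
    by rewrite /g; case: constructive_indefinite_description.
  pose f := fix f i := if i is i'.+1 then g (f i').+1 else g 0.
  have fmono : forall i j, i < j -> f i < f j.
    move=> i j; elim: j => // j IH; rewrite ltnS leq_eqVlt => /orP [/eqP -> | /IH H].
      exact: (proj1 (gP (f j).+1)).
    exact: (ltn_trans H (proj1 (gP (f j).+1))).
  apply: Hanti; exists (fun i => Kg (f i)); split.
    by case=> [|i]; [exact: (proj2 (gP 0)) | exact: (proj2 (gP (f i).+1))].
  move=> i j Hij /hle_KK Heq.
  case: (ltngtP i j) => [/fmono|/fmono|/eqP]; rewrite ?Heq ?ltnn //.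
  by move=> /eqP.
- case=> n [s Hs]; split.
  + case=> t [Ct Hdec].
    have chainP : forall i j, i <= j -> hle (t j) (t i).
      move=> i j; elim: j => [|j IH]; first by rewrite leqn0 => /eqP ->; exact: hle_refl.
      rewrite leq_eqVlt => /orP [/eqP -> | ]; first exact: hle_refl.
      rewrite ltnS => /IH H; apply: hle_trans H; by case: (Hdec j).
    pose h (i : 'I_n.+1) : 'I_n :=
      let (k, Hk) := constructive_indefinite_description _ (Hs _ (Ct i)) in Ordinal (proj1 Hk).
    have : ~ injective h by move=> /(@leq_card _ _ h); rewrite !card_ord ltnn.
    move=> Hni; apply: Hni => i j Hij; apply: NNPP => Hne.
    move: Hij; rewrite /h.
    case: constructive_indefinite_description => ki [Hki Ii].
    case: constructive_indefinite_description => kj [Hkj Ij] /(congr1 val) /= Ek.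
    subst kj.
    have Hl : forall a b : 'I_n.+1, graph_iso (t a) (s ki) -> graph_iso (t b) (s ki) ->
       (a : nat) < b -> False.
      move=> a b Ia Ib Hab.
      have H1 : hle (t a) (t b).
        apply: hle_trans (proj1 (iso_hle Ib)); exact: (proj2 (iso_hle Ia)).
      have H2 : hle (t b) (t a.+1) by apply: chainP.
      case: (Hdec a) => _; apply; exact: hle_trans H1 H2.
    case: (ltngtP i j) => [|| /val_inj //].
    * exact: Hl.
    * by move=> H; apply: (Hl j i).
  + case=> t [Ct Hanti].
    pose h (i : 'I_n.+1) : 'I_n :=
      let (k, Hk) := constructive_indefinite_description _ (Hs _ (Ct i)) in Ordinal (proj1 Hk).
    have : ~ injective h by move=> /(@leq_card _ _ h); rewrite !card_ord ltnn.
    move=> Hni; apply: Hni => i j Hij; apply: NNPP => Hne.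
    move: Hij; rewrite /h.
    case: constructive_indefinite_description => ki [Hki Ii].
    case: constructive_indefinite_description => kj [Hkj Ij] /(congr1 val) /= Ek.
    subst kj.
    apply: (Hanti i j); first by move=> /val_inj.
    apply: hle_trans (proj1 (iso_hle Ij)); exact: (proj2 (iso_hle Ii)).
Qed.

Lemma part2 (k : nat) (O : 'I_k -> graph) :
  ~ wqo hle (Av hle O) /\ ~ wqo shle (Av shle O).
Proof.
pose M := (\sum_(i < k) gn (O i)).+1.
have HM : forall i, gn (O i) < M.
  move=> i; rewrite ltnS (bigD1 i) //=; exact: leq_addr.
have avK : forall j, Av hle O (Kg (M + j)).
  move=> j i /hle_K H; have := HM i; rewrite ltnNge => /negP; apply.
  exact: leq_trans (leq_addr _ _) H.
split; case=> _; apply.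
- exists (fun j => Kg (M + j)); split => // i j Hij /hle_KK /eqP.
  by rewrite eqn_add2l => /eqP.
- exists (fun j => Kg (M + j)); split.
    by move=> j i /shle_hle; apply: avK.
  move=> i j Hij /shle_hle /hle_KK /eqP.
  by rewrite eqn_add2l => /eqP.
Qed.

Theorem theorem3p1 :
  (forall C : graph_class, down_closed hle C -> (wqo hle C <-> finite_class C)) /\
  (forall (k : nat) (O : 'I_k -> graph),
      ~ wqo hle (Av hle O) /\ ~ wqo shle (Av shle O)).
Proof. split; [exact: part1 | exact: part2]. Qed.
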